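(* Let $I$ be a real interval with $[0,1]\subseteq I\subseteq\mathbb{R}_+$, and let $f\colon I^n\to\mathbb{R}$ be a nonconstant quasi-Lovász extension, $f=L\circ\varphi$. Then the following are equivalent: (i) $f_0$ is weakly homogeneous; (ii) there exists $A\subseteq[n]$ with $f_0(\mathbf{1}_A)\neq0$; (iii) $\varphi(1)\neq 0$. Moreover, in this case $f_0(x\mathbf{1}_A)=\frac{\varphi(x)}{\varphi(1)}f_0(\mathbf{1}_A)$ for all $x\in I$ and all $A\subseteq[n]$.
   Context: Notation: $[n]=\{1,\ldots,n\}$; $\mathbf{1}_A$ is the indicator tuple of $A\subseteq[n]$, $\mathbf{0}=\mathbf{1}_\varnothing$; for a function $g$, $g_0=g-g(\mathbf{0})$. For $\sigma$ a permutation of $[n]$, $\mathbb{R}^n_\sigma=\{\mathbf{x}: x_{\sigma(1)}\leq\cdots\leq x_{\sigma(n)}\}$, $A^\uparrow_\sigma(i)=\{\sigma(i),\ldots,\sigma(n)\}$, $A^\uparrow_\sigma(n+1)=\varnothing$. The Lovász extension $L_\psi\colon\mathbb{R}^n\to\mathbb{R}$ of $\psi\colon\{0,1\}^n\to\mathbb{R}$ is the function whose restriction to each $\mathbb{R}^n_\sigma$ is the unique affine function agreeing with $\psi$ at the points $\mathbf{1}_{A^\uparrow_\sigma(k)}$, $k\in[n+1]$; a Lovász extension is any such $L_\psi$. A quasi-Lovász extension is a function $f\colon I^n\to\mathbb{R}$ with $f(\mathbf{x})=L(\varphi(x_1),\ldots,\varphi(x_n))$, where $L$ is a Lovász extension and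 $\varphi\colon I\to\mathbb{R}$ is nondecreasing with $\varphi(0)=0$. A function $g\colon I^n\to\mathbb{R}$ with $I\subseteq\mathbb{R}_+$ is weakly homogeneous if there exists a nondecreasing $\phi\colon I\to\mathbb{R}$ with $\phi(0)=0$ such that $g(x\mathbf{1}_A)=\phi(x)g(\mathbf{1}_A)$ for all $x\in I$, $A\subseteq[n]$. *)

(* Defs.v *)
From HB Require Import structures.
From mathcomp Require Import all_boot all_order all_algebra all_fingroup.
Set Implicit Arguments. Unset Strict Implicit. Unset Printing Implicit Defensive.
Import Order.TTheory GRing.Theory Num.Theory.
Local Open Scope ring_scope.

Section Defs.
Variable R : realFieldType.
Variable n : nat.

Definition indic (A : {set 'I_n}) : 'I_n -> R := fun i => (i \in A)%:R.

(* A^up_sigma(k+1) = {sigma(k+1),...,sigma(n)} with 0-based k : 'I_n.+1 ;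
   k = n gives the empty set *)
Definition Aup (s : 'S_n) (k : 'I_n.+1) : {set 'I_n} :=
  [set s j | j : 'I_n & (k <= j)%N].

Definition in_cone (s : 'S_n) (x : 'I_n -> R) : Prop :=
  forall j1 j2 : 'I_n, (j1 <= j2)%N -> x (s j1) <= x (s j2).

(* L is the Lovász extension of psi : {0,1}^n -> R (identified with subsets):
   on each cone, L coincides with an affine function agreeing with psi at the
   points 1_{A^up_sigma(k)}. *)
Definition lovasz_ext_of (psi : {set 'I_n} -> R) (L : ('I_n -> R) -> R) : Prop :=
  forall s : 'S_n, exists (c : R) (a : 'I_n -> R),
    (forall x, in_cone s x -> L x = c + \sum_i a i * x i) /\
    (forall k : 'I_n.+1,
        c + \sum_i a i * indic (Aup s k) i = psi (Aup s k)).

Definition is_lovasz_ext (L : ('I_n -> R) -> R) : Prop :=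
  exists psi, lovasz_ext_of psi L.

Definition is_interval (I : R -> Prop) : Prop :=
  forall x y z, I x -> I z -> x <= y -> y <= z -> I y.

Definition nondecr_on (I : R -> Prop) (phi : R -> R) : Prop :=
  forall x y, I x -> I y -> x <= y -> phi x <= phi y.

Definition in_dom (I : R -> Prop) (x : 'I_n -> R) : Prop := forall i, I (x i).

Definition quasi_lovasz (I : R -> Prop) (f : ('I_n -> R) -> R)
  (L : ('I_n -> R) -> R) (phi : R -> R) : Prop :=
  [/\ is_lovasz_ext L, nondecr_on I phi, phi 0 = 0 &
      forall x, in_dom I x -> f x = L (fun i => phi (x i))].

Definition zero_vec : 'I_n -> R := fun _ => 0.

Definition fzero (g : ('I_n -> R) -> R) : ('I_n -> R) -> R :=
  fun x => g x - g zero_vec.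

Definition weakly_homogeneous (I : R -> Prop) (g : ('I_n -> R) -> R) : Prop :=
  exists phi : R -> R, [/\ nondecr_on I phi, phi 0 = 0 &
    forall x (A : {set 'I_n}), I x ->
      g (fun i => x * indic A i) = phi x * g (indic A)].

Definition nonconstant_on (I : R -> Prop) (f : ('I_n -> R) -> R) : Prop :=
  exists x y, [/\ in_dom I x, in_dom I y & f x <> f y].

End Defs.

(* Main.v *)
Require Import Defs.
From HB Require Import structures.
From mathcomp Require Import all_boot all_order all_algebra all_fingroup.
Import Order.TTheory GRing.Theory Num.Theory.
Local Open Scope ring_scope.

Lemma exists_cone {R : realFieldType} {n : nat} (z : 'I_n -> R) :
  exists s : 'S_n, in_cone s z.
Proof.
pose leT := fun i j : 'I_n => z i <= z j.
have tot : total leT by move=> i j; exact: le_total.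
have pe : perm_eq (sort leT (enum 'I_n)) (ord_tuple n).
  by rewrite perm_sort val_ord_tuple.
case/tuple_permP: pe => p Hp.
exists p => j1 j2 hj.
have srt := sort_sorted tot (enum 'I_n).
have := sorted_leq_nth (fun a b c => @le_trans _ R (z a) (z b) (z c)) (fun a => lexx (z a)) j1 srt.
have E : forall j : 'I_n, nth j1 (sort leT (enum 'I_n)) j = p j.
  by move=> j; rewrite Hp -tnth_nth tnth_mktuple tnth_ord_tuple.
have sz : size (sort leT (enum 'I_n)) = n by rewrite size_sort size_enum_ord.
move=> /(_ j1 j2); rewrite !inE sz !ltn_ord !E; by apply.
Qed.

Lemma mem_Aup (n : nat) (s : 'S_n) (k : 'I_n.+1) (j : 'I_n) :
  (s j \in Aup s k) = (k <= j)%N.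
Proof.
rewrite /Aup; apply/imsetP/idP => [[j' hj' /perm_inj ->]|hk].
  by rewrite inE in hj'.
by exists j; rewrite ?inE.
Qed.

Section Lov.
Variable R : realFieldType.
Variable n : nat.
Variable L : ('I_n -> R) -> R.
Hypothesis HL : is_lovasz_ext L.

Lemma zero_cone (s : 'S_n) : in_cone s (@zero_vec R n).
Proof. by move=> ? ? _; rewrite /zero_vec. Qed.

Lemma L_const : (forall B, L (indic R B) = L (@zero_vec R n)) ->
  forall z, L z = L (@zero_vec R n).
Proof.
move=> HB z; case: HL => psi Hpsi.
have [s Hs] := exists_cone z.
have [c [a [Haff _]]] := Hpsi s.
have Hc : L (@zero_vec R n) = c.
  by rewrite Haff ?zero_cone // big1 ?addr0 // => i _; rewrite /zero_vec mulr0.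
have ell : forall k : 'I_n.+1, \sum_i a i * indic R (Aup s k) i = 0.
  move=> k; have := HB (Aup s k); rewrite Haff; last first.
    move=> j1 j2 hj; rewrite /indic !mem_Aup ler_nat.
    case: (leqP k j1) => h //=; by rewrite (leq_trans h hj).
  by rewrite Hc => /(congr1 (fun t => t - c)); rewrite addrC addKr subrr.
have key : forall m y, (forall j : 'I_n, (j < n - m)%N -> y (s j) = 0) ->
    \sum_i a i * y i = 0.
  elim=> [|m IH] y Hy.
    apply: big1 => i _.
    by rewrite -(permKV s i) Hy ?mulr0 // subn0 ltn_ord.
  case: (ltnP m n) => hmn; last first.
    apply: IH => j; rewrite (_ : n - m = 0)%N //; apply/eqP; by rewrite subn_eq0.
  have hk : (n - m.+1 < n.+1)%N by rewrite ltnS leq_subr.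
  pose k : 'I_n.+1 := Ordinal hk.
  have hk' : (n - m.+1 < n)%N by rewrite ltn_subrL /= (leq_ltn_trans (leq0n m) hmn).
  pose j0 : 'I_n := Ordinal hk'.
  pose y' := fun i => y i - y (s j0) * indic R (Aup s k) i.
  have -> : \sum_i a i * y i = \sum_i a i * y' i.
    apply/esym; rewrite /y'.
    under eq_bigr => i _ do rewrite mulrBr mulrCA.
    by rewrite sumrB -mulr_sumr ell mulr0 subr0.
  apply: IH => j hj; rewrite /y' /indic mem_Aup /=.
  have e : (n - m = (n - m.+1).+1)%N by rewrite subnS prednK // subn_gt0.
  rewrite e ltnS leq_eqVlt in hj.
  case/orP: hj => hj.
    have -> : j = j0 by apply/val_inj; rewrite /= (eqP hj).
    by rewrite /= leqnn mulr1 subrr.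
  rewrite Hy //.
  by rewrite leqNgt hj /= mulr0 subr0.
by rewrite Hc Haff // (key n) ?addr0 // => j; rewrite subnn.
Qed.

Lemma L_hom (A : {set 'I_n}) (t : R) : 0 <= t ->
  L (fun i => t * indic R A i) - L (@zero_vec R n) =
  t * (L (indic R A) - L (@zero_vec R n)).
Proof.
move=> t0; case: HL => psi Hpsi.
have [s Hs] := exists_cone (indic R A).
have [c [a [Haff _]]] := Hpsi s.
have Hc : L (@zero_vec R n) = c.
  by rewrite Haff ?zero_cone // big1 ?addr0 // => i _; rewrite /zero_vec mulr0.
rewrite Hc !Haff //; last by move=> j1 j2 hj; rewrite ler_wpM2l // Hs.
rewrite !(addrC c) !addrK mulr_sumr; apply: eq_bigr => i _.
by rewrite mulrCA.
Qed.

End Lov.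

From Stdlib Require Import Classical FunctionalExtensionality.

Theorem proposition3 (R : realFieldType) (n : nat) (I : R -> Prop)
  (f : ('I_n -> R) -> R) (L : ('I_n -> R) -> R) (phi : R -> R) :
  is_interval I ->
  (forall x : R, 0 <= x -> x <= 1 -> I x) ->
  (forall x : R, I x -> 0 <= x) ->
  quasi_lovasz I f L phi ->
  nonconstant_on I f ->
  [/\ (weakly_homogeneous I (fzero f) <->
         exists A : {set 'I_n}, fzero f (indic R A) <> 0),
      ((exists A : {set 'I_n}, fzero f (indic R A) <> 0) <-> phi 1 <> 0) &
      (phi 1 <> 0 ->
         forall (x : R) (A : {set 'I_n}), I x ->
           fzero f (fun i => x * indic R A i) = phi x / phi 1 * fzero f (indic R A))].
Proof.
move=> Hint H01 Hpos [HL Hmono Hphi0 Hf] [u [v [Hu Hv Huv]]].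
have I0 : I 0 by apply: H01; rewrite ?lexx ?ler01.
have I1 : I 1 by apply: H01; rewrite ?lexx ?ler01.
pose D A := L (indic R A) - L (@zero_vec R n).
have phipos : forall x, I x -> 0 <= phi x.
  by move=> x Ix; rewrite -Hphi0; apply: Hmono => //; apply: Hpos.
have fz : f (@zero_vec R n) = L (@zero_vec R n).
  rewrite Hf; last by move=> i; exact: I0.
  by congr L; apply: functional_extensionality => i; rewrite /zero_vec Hphi0.
have key : forall x A, I x -> fzero f (fun i => x * indic R A i) = phi x * D A.
  move=> x A Ix; rewrite /fzero fz Hf; last first.
    by move=> i; rewrite /indic; case: (i \in A); rewrite /= ?mulr1 ?mulr0.
  rewrite -(L_hom _ _ _ HL) //; last exact: phipos.
  congr (L _ - _); apply: functional_extensionality => i.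
  by rewrite /indic; case: (i \in A); rewrite /= ?mulr1 ?mulr0.
have key1 : forall A, fzero f (indic R A) = phi 1 * D A.
  move=> A; rewrite -key //; congr (fzero f _).
  by apply: functional_extensionality => i; rewrite mul1r.
have notD0 : ~ (forall A, D A = 0).
  move=> HD; apply: Huv.
  have HB : forall B, L (indic R B) = L (@zero_vec R n).
    by move=> B; apply/eqP; rewrite -subr_eq0; apply/eqP; exact: HD.
  by rewrite !Hf // (L_const _ _ _ HL HB) (L_const _ _ _ HL HB).
have notphi0 : ~ (forall x, I x -> phi x = 0).
  move=> Hp; apply: Huv; rewrite !Hf //.
  have -> : (fun i => phi (u i)) = @zero_vec R n.
    by apply: functional_extensionality => i; rewrite Hp.
  have -> : (fun i => phi (v i)) = @zero_vec R n.
    by apply: functional_extensionality => i; rewrite Hp.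
  by [].
have exD : exists A, D A <> 0.
  apply: NNPP => H; apply: notD0 => A; apply: NNPP => hA; apply: H; by exists A.
have ii_iii : (exists A, fzero f (indic R A) <> 0) <-> phi 1 <> 0.
  split.
    by move=> [A hA] h1; apply: hA; rewrite key1 h1 mul0r.
  move=> h1; have [A hA] := exD; exists A; rewrite key1.
  by apply/eqP; rewrite mulf_eq0 negb_or; apply/andP; split; apply/eqP.
have moreover : phi 1 <> 0 -> forall (x : R) (A : {set 'I_n}), I x ->
    fzero f (fun i => x * indic R A i) = phi x / phi 1 * fzero f (indic R A).
  move=> h1 x A Ix; rewrite key1 key // mulrA divfK //; exact/eqP.
split => //; split.
  move=> [psi' [_ _ Hpsi]]; apply: NNPP => hn.
  have z1 : forall A, fzero f (indic R A) = 0.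
    by move=> A; apply: NNPP => h; apply: hn; exists A.
  have [A hA] := exD.
  apply: notphi0 => x Ix.
  have := Hpsi x A Ix; rewrite key // z1 mulr0 => /eqP.
  by rewrite mulf_eq0 => /orP [/eqP // | /eqP].
move=> hii; have h1 := (proj1 ii_iii hii).
have p1 : 0 < phi 1 by rewrite lt_def; apply/andP; split; [exact/eqP | exact: phipos].
exists (fun x => phi x / phi 1); split.
- move=> x y Ix Iy xy; apply: ler_wpM2r; [by rewrite invr_ge0 ltW | exact: Hmono].
- by rewrite Hphi0 mul0r.
- by move=> x A Ix; apply: moreover.
Qed.
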